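(* Let $(M,I,J,K)$ be a hypercomplex manifold of quaternionic dimension $n$, let $\Omega_1$ be a strictly positive $(2,0)$-form (w.r.t. $I$), i.e. $\Omega_1(z,\bar zJ)>0$ for every nonzero $(1,0)$-vector $z$, and let $\Omega_2$ be a q-real $(2,0)$-form on $M$. Then for each $x\in M$ there exists a basis $e_1,\bar e_1J,\dots,e_n,\bar e_nJ$ of $T^{1,0}_xM$ such that for all $i\ne j$ $$\Omega_1(e_i,e_j)=\Omega_2(e_i,e_j)=\Omega_1(e_i,\bar e_jJ)=\Omega_2(e_i,\bar e_jJ)=0.$$
   Context: A hypercomplex manifold $(M,I,J,K)$ carries three integrable complex structures with $I\circ J\circ K=-\mathrm{id}_{TM}$; endomorphisms act on tangent vectors from the right (written $v\mapsto vJ$, extended complex-linearly); types $(p,q)$ and $T^{1,0}M$ refer to $I$, and $J$ maps $T^{0,1}_xM$ to $T^{1,0}_xM$. An endomorphism $L$ acts on forms by $(L\alpha)(X_1,\dots,X_k)=\alpha(X_1L,\dots,X_kL)$. A $(2,0)$-form $\alpha$ is q-real if $J\alpha=\bar\alpha$. *)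

(* Defs.v *)
From HB Require Import structures.
From mathcomp Require Import all_boot all_algebra.
From mathcomp Require Import complex.
From mathcomp Require Import Rstruct.
Set Implicit Arguments. Unset Strict Implicit. Unset Printing Implicit Defensive.
Import GRing.Theory Num.Theory.
Local Open Scope ring_scope.

Definition Cx : numClosedFieldType := (Rdefinitions.R)[i].

(* Pointwise model of a hypercomplex manifold of quaternionic dimension n at a
   point x: V = T^{1,0}_x M, a complex vector space of dimension 2n, together
   with the map  jJ : z |-> \bar z J  (T^{1,0} -> T^{0,1} -> T^{1,0}), which is
   antilinear and satisfies jJ (jJ z) = - z (since J^2 = -1). *)
Definition antilinear (V : vectType Cx) (j : V -> V) : Prop :=
  forall (a : Cx) (u v : V), j (a *: u + v) = a^* *: j u + j v.

Definition quat_structure (V : vectType Cx) (j : V -> V) : Prop :=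
  antilinear j /\ (forall u : V, j (j u) = - u).

(* A (2,0)-form at x, i.e. its restriction to T^{1,0}_x: an alternating
   complex-bilinear form on V (linearity in the 2nd slot follows from
   linearity in the 1st slot and antisymmetry). *)
Definition form20 (V : vectType Cx) (Om : V -> V -> Cx) : Prop :=
  (forall (a : Cx) (u v w : V), Om (a *: u + v) w = a * Om u w + Om v w) /\
  (forall u v : V, Om u v = - Om v u).

(* Strictly positive: Om(z, \bar z J) > 0 (real and positive) for z <> 0. *)
Definition strictly_positive (V : vectType Cx) (j : V -> V) (Om : V -> V -> Cx) : Prop :=
  forall z : V, z != 0 -> 0 < Om z (j z).

(* q-real: J Om = \bar Om. Evaluated on (0,1)-vectors \bar z, \bar w this reads
   Om(\bar z J, \bar w J) = conj (Om (z, w)) for z, w in T^{1,0}. *)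
Definition q_real (V : vectType Cx) (j : V -> V) (Om : V -> V -> Cx) : Prop :=
  forall z w : V, Om (j z) (j w) = (Om z w)^*.

Definition quat_family (V : vectType Cx) (j : V -> V) (n : nat) (e : 'I_n -> V) : seq V :=
  flatten [seq [:: e i; j (e i)] | i <- enum 'I_n].

(* Main.v *)
Require Import Defs.
From HB Require Import structures.
From mathcomp Require Import all_boot all_order all_algebra.
From mathcomp Require Import complex Rstruct ring zify.
Import GRing.Theory Num.Theory.
Local Open Scope ring_scope.
Set Implicit Arguments. Unset Strict Implicit.

Lemma twice0 (x : Cx) : x = - x -> x = 0.
Proof.
move=> h; apply/eqP; have : x *+ 2 == 0 by rewrite mulr2n {2}h subrr.
by rewrite mulrn_eq0.
Qed.

Lemma dbl0 (M : zmodType) (x : M) : x = x + x -> x = 0.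
Proof. by move=> h; apply: (addrI x); rewrite addr0 -h. Qed.

Lemma om0l (V : vectType Cx) (Om : V -> V -> Cx) : form20 Om -> forall w, Om 0 w = 0.
Proof.
case=> H1 _ w; apply: dbl0; have := H1 1 0 0 w.
by rewrite scaler0 addr0 mul1r.
Qed.

Lemma omDl (V : vectType Cx) (Om : V -> V -> Cx) : form20 Om ->
  forall u v w, Om (u + v) w = Om u w + Om v w.
Proof. by move=> [H1 _] u v w; have := H1 1 u v w; rewrite scale1r mul1r. Qed.

Lemma omZl (V : vectType Cx) (Om : V -> V -> Cx) : form20 Om ->
  forall a u w, Om (a *: u) w = a * Om u w.
Proof. move=> H a u w; case: (H) => H1 _; by rewrite -[a *: u]addr0 H1 om0l // addr0. Qed.

Lemma omNl (V : vectType Cx) (Om : V -> V -> Cx) : form20 Om ->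
  forall u w, Om (- u) w = - Om u w.
Proof. by move=> H u w; rewrite -scaleN1r omZl // mulN1r. Qed.

Lemma omDr (V : vectType Cx) (Om : V -> V -> Cx) : form20 Om ->
  forall u v w, Om w (u + v) = Om w u + Om w v.
Proof. move=> H u v w; case: (H) => _ H2; by rewrite H2 omDl // opprD -!H2. Qed.

Lemma omZr (V : vectType Cx) (Om : V -> V -> Cx) : form20 Om ->
  forall a u w, Om w (a *: u) = a * Om w u.
Proof. move=> H a u w; case: (H) => _ H2; by rewrite H2 omZl // -mulrN -H2. Qed.

Lemma omNr (V : vectType Cx) (Om : V -> V -> Cx) : form20 Om ->
  forall u w, Om w (- u) = - Om w u.
Proof. by move=> H u w; rewrite -scaleN1r omZr // mulN1r. Qed.

Lemma om0r (V : vectType Cx) (Om : V -> V -> Cx) : form20 Om -> forall w, Om w 0 = 0.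
Proof. move=> H w; case: (H) => _ H2; by rewrite H2 om0l // oppr0. Qed.

Lemma omuu (V : vectType Cx) (Om : V -> V -> Cx) : form20 Om -> forall u, Om u u = 0.
Proof. by move=> [_ H2] u; apply: twice0; apply: H2. Qed.

Lemma omsuml (V : vectType Cx) (Om : V -> V -> Cx) : form20 Om ->
  forall (I : Type) (r : seq I) (P : pred I) (c : I -> Cx) (v : I -> V) w,
  Om (\sum_(i <- r | P i) c i *: v i) w = \sum_(i <- r | P i) c i * Om (v i) w.
Proof.
move=> H I r P c v w; elim/big_rec2: _ => [|i x y _ <-]; first exact: om0l.
by have [H1 _] := H; rewrite H1.
Qed.

Lemma omsumr (V : vectType Cx) (Om : V -> V -> Cx) : form20 Om ->
  forall (I : Type) (r : seq I) (P : pred I) (c : I -> Cx) (v : I -> V) w,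
  Om w (\sum_(i <- r | P i) c i *: v i) = \sum_(i <- r | P i) c i * Om w (v i).
Proof.
move=> H I r P c v w; elim/big_rec2: _ => [|i x y _ <-]; first exact: om0r.
by rewrite omDr // omZr.
Qed.

Lemma j0 (V : vectType Cx) (j : V -> V) : antilinear j -> j 0 = 0.
Proof.
move=> H; apply: dbl0; have := H 1 0 0.
by rewrite scaler0 addr0 conjC1 scale1r.
Qed.

Lemma jD (V : vectType Cx) (j : V -> V) : antilinear j -> forall u v, j (u + v) = j u + j v.
Proof. by move=> H u v; have := H 1 u v; rewrite conjC1 !scale1r. Qed.

Lemma jZ (V : vectType Cx) (j : V -> V) : antilinear j -> forall a u, j (a *: u) = a^* *: j u.
Proof. by move=> H a u; rewrite -[a *: u]addr0 H j0 // addr0. Qed.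

Lemma jN (V : vectType Cx) (j : V -> V) : antilinear j -> forall u, j (- u) = - j u.
Proof. by move=> H u; rewrite -scaleN1r jZ // rmorphN1 scaleN1r. Qed.


Lemma herm_diag (V : vectType Cx) (j : V -> V) (Om1 : V -> V -> Cx) :
  form20 Om1 -> strictly_positive j Om1 -> forall z, (Om1 z (j z))^* = Om1 z (j z).
Proof.
move=> F P z; have [->|nz] := eqVneq z 0; first by rewrite om0l // conjC0.
by apply/CrealP; apply: gtr0_real; apply: P.
Qed.

Lemma herm (V : vectType Cx) (j : V -> V) (Om1 : V -> V -> Cx) :
  quat_structure j -> form20 Om1 -> strictly_positive j Om1 ->
  forall z w, Om1 w (j z) = (Om1 z (j w))^*.
Proof.
move=> [A J2] F P z w.
have E1 := herm_diag F P (z + w).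
have E2 := herm_diag F P ('i *: z + w).
rewrite !(jD A, jZ A, omDl F, omDr F, omZl F, omZr F) conjCi !rmorphD !rmorphM /= in E1 E2.
rewrite !(rmorphD, rmorphM, rmorphN) /= conjCi opprK !(herm_diag F P) in E1 E2.
have ii2 : 'i * 'i = -1 :> Cx by rewrite -expr2 sqrCi.
move: E1 E2 ii2; generalize (Om1 z (j z)) (Om1 w (j w)) (Om1 z (j w)) (Om1 w (j z)) ('i : Cx).
move=> p q a b ii E1 E2 ii2.
have {}E1 : p + a^* + (b^* + q) - (p + a + (b + q)) = 0 by rewrite E1 subrr.
move/eqP: E2; rewrite -subr_eq0 => /eqP E2.
have H : (a^* - b) *+ 2 = 0.
  rewrite -[RHS](_ : 0 + ii * 0 + (ii*ii+1)*(a^* - b^* + a - b) = 0); last first.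
    by rewrite ii2 addNr mul0r mulr0 !addr0.
  rewrite -{1}E1 -E2; ring.
by move/eqP: H; rewrite mulrn_eq0 /= subr_eq0 => /eqP.
Qed.

Lemma qreal1 (V : vectType Cx) (j : V -> V) (Om1 : V -> V -> Cx) :
  quat_structure j -> form20 Om1 -> strictly_positive j Om1 -> q_real j Om1.
Proof.
move=> Q F P z w; have [A J2] := Q.
by rewrite (herm Q F P w (j z)) J2 omNr // -(proj2 F).
Qed.


Lemma eigen (V : vectType Cx) (j : V -> V) (Om1 Om2 : V -> V -> Cx) :
  quat_structure j -> form20 Om1 -> strictly_positive j Om1 -> form20 Om2 ->
  forall W : {vspace V}, (forall w, w \in W -> j w \in W) -> (0 < \dim W)%N ->
  exists e lam, [/\ e \in W, e != 0 & forall w, w \in W -> Om2 e w = lam * Om1 e w].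
Proof.
move=> Q F1 P F2 W jW dpos.
pose b := vbasis W.
pose vec (y : 'rV[Cx]_(\dim W)) := \sum_(k < \dim W) y 0 k *: b`_k.
have bW : forall k : 'I_(\dim W), b`_k \in W.
  by move=> k; apply: vbasis_mem; apply: mem_nth; rewrite size_tuple.
have vecW : forall y, vec y \in W.
  by move=> y; apply: memv_suml => k _; apply: memvZ.
have matE : forall (Om : V -> V -> Cx), form20 Om -> forall y (l : 'I_(\dim W)),
    Om (vec y) b`_l = (y *m \matrix_(k, l) Om b`_k b`_l) 0 l.
  by move=> Om F y l; rewrite omsuml // !mxE; apply: eq_bigr => k _; rewrite mxE.
have expW : forall (Om : V -> V -> Cx), form20 Om -> forall u w, w \in W ->
    Om u w = \sum_(l < \dim W) coord b l w * Om u b`_l.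
  by move=> Om F u w Hw; rewrite {1}(coord_vbasis Hw) omsumr.
have vec0 : forall y, vec y = 0 -> y = 0.
  move=> y h; apply/rowP => k; rewrite mxE.
  have := congr1 (coord b k) h; rewrite linear0 linear_sum /=.
  rewrite (bigD1 k) //= big1 => [|i ik]; rewrite linearZ /= coord_free ?(basis_free (vbasisP W)) //.
    by rewrite eqxx mulr1 addr0.
  by rewrite (negbTE ik) mulr0.
pose H : 'M[Cx]_(\dim W) := \matrix_(k, l) Om1 b`_k b`_l.
pose G : 'M[Cx]_(\dim W) := \matrix_(k, l) Om2 b`_k b`_l.
have Hu : H \in unitmx.
  rewrite -row_free_unit; apply: inj_row_free => y hy; apply: vec0.
  apply/eqP; apply/negPn/negP => nz.
  have := P _ nz; rewrite (expW _ F1 _ _ (jW _ (vecW y))) big1 => [|l _]; first by rewrite Order.POrderTheory.ltxx.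
  by rewrite matE // hy mxE mulr0.
pose M := G *m invmx H.
have [lam rootl] : exists lam, root (char_poly M) lam.
  by apply/closed_rootP; rewrite size_char_poly eqSS -lt0n.
have : eigenvalue M lam by rewrite eigenvalue_root_char.
case/eigenvalueP => y hy ynz.
have yG : y *m G = lam *: (y *m H).
  by rewrite scalemxAl -hy -mulmxA /M mulmxKV.
exists (vec y), lam; split => //.
  by apply/eqP => /vec0 h; rewrite h eqxx in ynz.
move=> w Hw; rewrite (expW _ F2 _ _ Hw) (expW _ F1 _ _ Hw) mulr_sumr.
apply: eq_bigr => l _; rewrite !matE // -/H -/G yG mxE; ring.
Qed.


Lemma lin_om (V : vectType Cx) (Om : V -> V -> Cx) : form20 Om -> forall u,
  exists f : 'Hom(V, Cx^o), forall w, f w = Om u w.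
Proof.
move=> F u.
pose g := (fun w : V => (Om u w : Cx^o)).
have lg : linear g by move=> a v w; rewrite /g omDr // omZr.
pose gL : {linear V -> Cx^o} := HB.pack g (GRing.isLinear.Build _ _ _ _ g lg).
by exists (linfun gL) => w; rewrite lfunE.
Qed.

Lemma dim_ker1 (V : vectType Cx) (f : 'Hom(V, Cx^o)) (U : {vspace V}) :
  (\dim U <= (\dim (U :&: lker f)).+1)%N.
Proof.
rewrite -(limg_ker_dim f U) addnC -add1n leq_add2r.
by rewrite (leq_trans (dimvS (subvf _))) // dimvf.
Qed.

Lemma ind_step (V : vectType Cx) (j : V -> V) (Om1 Om2 : V -> V -> Cx) :
  quat_structure j -> form20 Om1 -> strictly_positive j Om1 ->
  form20 Om2 -> q_real j Om2 ->
  forall k (W : {vspace V}), (forall w, w \in W -> j w \in W) -> (k.*2 <= \dim W)%N ->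
  exists e : 'I_k -> V, [/\ forall a, e a \in W, forall a, e a != 0 &
    forall a b, a != b -> [/\ Om1 (e a) (e b) = 0, Om2 (e a) (e b) = 0,
           Om1 (e a) (j (e b)) = 0 & Om2 (e a) (j (e b)) = 0]].
Proof.
move=> Q F1 P F2 R2; have [A J2] := Q; have R1 := qreal1 Q F1 P.
elim=> [|k IH] W jW dW.
  by exists (fun _ => 0); split => -[].
have [e [lam [eW enz eq2]]] := eigen Q F1 P F2 jW (leq_trans (isT : (0 < k.+1.*2)%N) dW).
have eq2j : forall w, w \in W -> Om2 (j e) w = lam^* * Om1 (j e) w.
  move=> w Hw; have := R2 e (j w); rewrite J2 omNr // eq2 ?jW // rmorphM /=.
  rewrite -R1 J2 omNr // mulrN => /eqP; rewrite eqr_opp => /eqP //.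
have [f1 f1E] := lin_om F1 e.
have [f2 f2E] := lin_om F1 (j e).
pose W' := (W :&: lker f1 :&: lker f2)%VS.
have memW' : forall w, w \in W' -> [/\ w \in W, Om1 e w = 0 & Om1 (j e) w = 0].
  move=> w; rewrite !memv_cap => /andP[/andP[Hw k1] k2].
  have h1 : Om1 e w = 0 by move: k1 (memv_ker f1 w) => -> /esym/eqP; rewrite f1E.
  have h2 : Om1 (j e) w = 0 by move: k2 (memv_ker f2 w) => -> /esym/eqP; rewrite f2E.
  by [].
have W'P : forall w, w \in W' -> [/\ Om1 e w = 0, Om2 e w = 0, Om1 (j e) w = 0 & Om2 (j e) w = 0].
  move=> w /memW' [Hw h1 h2]; split => //; first by rewrite eq2 // h1 mulr0.
  by rewrite eq2j // h2 mulr0.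
have jW' : forall w, w \in W' -> j w \in W'.
  move=> w /memW' [Hw h1 h2].
  rewrite !memv_cap jW //=; apply/andP; split.
    move: (memv_ker f1 (j w)) => ->; rewrite f1E.
    by rewrite (herm Q F1 P) (proj2 F1) h2 oppr0 conjC0.
  by move: (memv_ker f2 (j w)) => ->; rewrite f2E R1 h1 conjC0.
have dW' : (k.*2 <= \dim W')%N.
  have := dim_ker1 f2 (W :&: lker f1); have := dim_ker1 f1 W.
  move: dW; rewrite doubleS /W'; lia.
have [e' [e'W e'nz e'P]] := IH W' jW' dW'.
pose E (a : 'I_k.+1) := if unlift ord0 a is Some a' then e' a' else e.
exists E; split.
- move=> a; rewrite /E; case: (unlift ord0 a) => [a'|] //.
  by have [] := memW' _ (e'W a').
- by move=> a; rewrite /E; case: (unlift ord0 a) => [a'|] //.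
move=> a b; rewrite /E.
case: (unliftP ord0 a) => [a'|] ->; case: (unliftP ord0 b) => [b'|] -> //.
- move=> ab; apply: e'P; by apply: contraNneq ab => ->.
- move=> _; have [h1 h2 h3 h4] := W'P _ (e'W a').
  by rewrite (proj2 F1) h1 oppr0 (proj2 F2) h2 oppr0 (proj2 F1) h3 oppr0 (proj2 F2) h4 oppr0.
- move=> _; have [h1 h2 _ _] := W'P _ (e'W b').
  by have [h3 h4 _ _] := W'P _ (jW' _ (e'W b')).
Qed.


Lemma free_orth (V : vectType Cx) (j : V -> V) (Om1 : V -> V -> Cx) (s : seq V) :
  form20 Om1 ->
  (forall i, (i < size s)%N -> Om1 s`_i (j s`_i) != 0) ->
  (forall i l, (i < size s)%N -> (l < size s)%N -> i != l -> Om1 s`_i (j s`_l) = 0) ->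
  free s.
Proof.
move=> F diag off; suff : free (in_tuple s) by []. apply/freeP => k Hk i.
have := congr1 (fun v => Om1 v (j s`_i)) Hk; rewrite /= om0l // omsuml //.
rewrite (bigD1 i) //= big1 => [|l li].
  rewrite addr0 => /eqP; rewrite mulf_eq0 (negbTE (diag i (ltn_ord i))) orbF.
  by move/eqP.
by rewrite off ?mulr0.
Qed.

Lemma size_qf (T U : Type) (f g : T -> U) (s : seq T) :
  size (flatten [seq [:: f x; g x] | x <- s]) = (size s).*2.
Proof. by elim: s => //= x s ->. Qed.

Lemma nth_qf (T U : Type) (u0 : U) (x0 : T) (f g : T -> U) (s : seq T) i :
  (i./2 < size s)%N ->
  nth u0 (flatten [seq [:: f x; g x] | x <- s]) i = (if odd i then g else f) (nth x0 s i./2).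
Proof.
elim: s i => [|x s IH] [|[|i]] //= hi.
by rewrite IH // negbK.
Qed.

Lemma nth_quat (V : vectType Cx) (j : V -> V) n (e : 'I_n -> V) i (hi : (i./2 < n)%N) :
  (quat_family j e)`_i = if odd i then j (e (Ordinal hi)) else e (Ordinal hi).
Proof.
rewrite /quat_family (nth_qf _ (Ordinal hi)) ?size_enum_ord //.
have -> : nth (Ordinal hi) (enum 'I_n) i./2 = Ordinal hi.
  by apply: val_inj; rewrite /= nth_enum_ord.
by case: (odd i).
Qed.


Unset Implicit Arguments.

Theorem lemma3 (n : nat) (V : vectType Cx) (j : V -> V)
    (Om1 Om2 : V -> V -> Cx) :
  \dim (fullv : {vspace V}) = (2 * n)%N ->
  quat_structure j ->
  form20 Om1 -> strictly_positive j Om1 ->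
  form20 Om2 -> q_real j Om2 ->
  exists e : 'I_n -> V,
    basis_of fullv (quat_family j e) /\
    (forall a b : 'I_n, a != b ->
       [/\ Om1 (e a) (e b) = 0, Om2 (e a) (e b) = 0,
           Om1 (e a) (j (e b)) = 0 & Om2 (e a) (j (e b)) = 0]).
Proof.
move=> dV Q F1 P F2 R2; have [A J2] := Q; have R1 := qreal1 Q F1 P.
have dW : (n.*2 <= \dim (fullv : {vspace V}))%N by rewrite dV -mul2n.
have [e [_ enz eP]] := ind_step Q F1 P F2 R2 (fun w _ => memvf (j w)) dW.
exists e; split => //.
have sz : size (quat_family j e) = n.*2 by rewrite size_qf size_enum_ord.
rewrite basisEfree subvf sz dV -mul2n leqnn andbT.
rewrite andbT.
apply: (free_orth (j := j) F1) => [i|i l]; rewrite sz.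
  move=> hi; have hi' : (i./2 < n)%N by rewrite ltn_half_double.
  rewrite nth_quat; have pos := P _ (enz (Ordinal hi')).
  case: (odd i); last exact: lt0r_neq0.
  by rewrite J2 omNr // -(proj2 F1) lt0r_neq0.
move=> hi hl il.
have hi' : (i./2 < n)%N by rewrite ltn_half_double.
have hl' : (l./2 < n)%N by rewrite ltn_half_double.
rewrite (nth_quat _ _ hi') (nth_quat _ _ hl').
case: (eqVneq (Ordinal hi') (Ordinal hl')) => [ab|ab].
  have hv : i./2 = l./2 by have := congr1 val ab.
  rewrite -ab.
  case oi: (odd i); case ol: (odd l).
  - have : i = l by rewrite -(odd_double_half i) -(odd_double_half l) oi ol hv.
    by move/eqP; rewrite (negbTE il).
  - by rewrite omuu.
  - by rewrite J2 omNr // omuu // oppr0.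
  - have : i = l by rewrite -(odd_double_half i) -(odd_double_half l) oi ol hv.
    by move/eqP; rewrite (negbTE il).
have [h1 _ h3 _] := eP _ _ ab.
have [_ _ h3' _] := eP _ _ (ltac:(by rewrite eq_sym) : Ordinal hl' != Ordinal hi').
case: (odd i); case: (odd l).
- by rewrite J2 omNr // -(proj2 F1) h3'.
- by rewrite R1 h1 conjC0.
- by rewrite J2 omNr // h1 oppr0.
- by rewrite h3.
Qed.
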